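(* Let $p \ge 1$ and let $G_p$ be the graph obtained from the cycle $C_6$ by substituting a complete graph $K_p$ for each vertex. Then $G_p$ is $(4K_1, C_4, \text{claw})$-free, $G_p$ is $2p$-colourable, and $G_p$ has a frozen $3p$-colouring.
   Context: All graphs are finite and simple. Substituting a graph $H$ for a vertex $v$ of $G$ means taking $G-v$, adding a disjoint copy of $H$, and joining every vertex of $H$ to every neighbour of $v$ in $G$ (done for each vertex of $C_6$ in turn). A $k$-colouring is a proper colouring with colours $\{1,\dots,k\}$. A $k$-colouring is frozen if, for every vertex $v$, all $k$ colours appear in the closed neighbourhood of $v$ (equivalently, it is an isolated vertex of the reconfiguration graph of $k$-colourings, where two colourings are adjacent if they differ on exactly one vertex). $\mathcal{H}$-free means no induced subgraph isomorphic to a member of $\mathcal{H}$; $4K_1$ is the edgeless graph on 4 vertices, claw is $K_{1,3}$. *)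

(* Defs.v *)
From mathcomp Require Import all_boot.
Set Implicit Arguments. Unset Strict Implicit. Unset Printing Implicit Defensive.

Definition C6_adj (i j : 'I_6) : bool :=
  (val j == (val i + 1) %% 6) || (val i == (val j + 1) %% 6).

(* G_p: substitute K_p for every vertex of C_6.  Vertex (i,a) is the a-th
   vertex of the copy of K_p replacing vertex i of C_6. *)
Definition Gp_vert (p : nat) : finType := ('I_6 * 'I_p)%type.
Definition Gp_adj (p : nat) : rel (Gp_vert p) :=
  fun x y => ((x.1 == y.1) && (x.2 != y.2)) || C6_adj x.1 y.1.

Definition induced_sub (HV : finType) (eH : rel HV) (V : finType) (e : rel V) : Prop :=
  exists f : HV -> V, injective f /\ forall x y, e (f x) (f y) = eH x y.

Definition fourK1_adj : rel 'I_4 := fun _ _ => false.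
Definition C4_adj : rel 'I_4 :=
  fun i j => (val j == (val i + 1) %% 4) || (val i == (val j + 1) %% 4).
Definition claw_adj : rel 'I_4 :=
  fun i j => (i != j) && ((val i == 0) || (val j == 0)).

Definition four_K1_C4_claw_free (V : finType) (e : rel V) : Prop :=
  ~ induced_sub fourK1_adj e /\ ~ induced_sub C4_adj e /\ ~ induced_sub claw_adj e.

(* A k-colouring: colours {1..k} represented by 'I_k. *)
Definition proper_colouring (V : finType) (e : rel V) (k : nat) (c : V -> 'I_k) : Prop :=
  forall x y, e x y -> c x != c y.

Definition colourable (V : finType) (e : rel V) (k : nat) : Prop :=
  exists c : V -> 'I_k, proper_colouring e c.

Definition frozen (V : finType) (e : rel V) (k : nat) (c : V -> 'I_k) : Prop :=
  forall (v : V) (a : 'I_k), exists u : V, ((u == v) || e v u) && (c u == a).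

Definition has_frozen_colouring (V : finType) (e : rel V) (k : nat) : Prop :=
  exists c : V -> 'I_k, proper_colouring e c /\ frozen e c.

(* Main.v *)
Require Import Defs.
From mathcomp Require Import all_boot.
Definition c6n (i j : nat) := (j == (i + 1) %% 6) || (i == (j + 1) %% 6).
Definition A6n (i j : nat) := (i == j) || c6n i j.
Definition nogood (eH : nat -> nat -> bool) :=
  all (fun a => all (fun b => all (fun c => all (fun d =>
  ~~ all (fun x => all (fun y => (x != y) ==> (A6n (nth 0 [:: a; b; c; d] x) (nth 0 [:: a; b; c; d] y) == eH x y)) (iota 0 4)) (iota 0 4))
  (iota 0 6)) (iota 0 6)) (iota 0 6)) (iota 0 6).
Lemma c1 : nogood (fun _ _ => false). Proof. by vm_compute. Qed.
Lemma c2 : nogood (fun i j => (j == (i + 1) %% 4) || (i == (j + 1) %% 4)). Proof. by vm_compute. Qed.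
Lemma c3 : nogood (fun i j => (i != j) && ((i == 0) || (j == 0))). Proof. by vm_compute. Qed.
Lemma c4 : all (fun i => all (fun q => has (fun j => ((j == i) || c6n i j) && (j %% 3 == q)) (iota 0 6)) (iota 0 3)) (iota 0 6).
Proof. by vm_compute. Qed.
Lemma c5 : all (fun i => all (fun j => c6n i j ==> (i %% 3 != j %% 3) && (i %% 2 != j %% 2)) (iota 0 6)) (iota 0 6).
Proof. by vm_compute. Qed.

Section S.
Variable p : nat.
Hypothesis hp : 0 < p.

Lemma nofree (eH : rel 'I_4) (eHn : nat -> nat -> bool) :
  (forall x y : 'I_4, eH x y = eHn x y) -> nogood eHn -> ~ induced_sub eH (@Gp_adj p).
Proof.
move=> EH Hng [f [finj Hf]].
have key : forall x y : 'I_4, x != y -> A6n (f x).1 (f y).1 = eH x y.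
  move=> x y nxy; rewrite -Hf /Gp_adj /A6n /C6_adj /c6n.
  have nf : f x != f y by apply: contra nxy => /eqP /finj ->.
  case: (f x) (f y) nf => [a b] [c d] /=.
  rewrite xpair_eqE negb_and.
  case: (eqVneq a c) => [->|ne] /=; first by move=> ->; rewrite eqxx.
  by move=> _; have ne' : (a : nat) != c by []; rewrite (negbTE ne').
move: Hng; rewrite /nogood.
move=> /allP /(_ (val (f (inord 0)).1)); rewrite mem_iota ltn_ord => /(_ isT).
move=> /allP /(_ (val (f (inord 1)).1)); rewrite mem_iota ltn_ord => /(_ isT).
move=> /allP /(_ (val (f (inord 2)).1)); rewrite mem_iota ltn_ord => /(_ isT).
move=> /allP /(_ (val (f (inord 3)).1)); rewrite mem_iota ltn_ord => /(_ isT).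
move/negP; apply.
have nthE : forall x, x < 4 -> nth 0 [:: val (f (inord 0)).1; val (f (inord 1)).1;
    val (f (inord 2)).1; val (f (inord 3)).1] x = val (f (inord x)).1.
  by case=> [|[|[|[|]]]].
apply/allP => x; rewrite mem_iota add0n => /andP[_ hx]; apply/allP => y; rewrite mem_iota add0n => /andP[_ hy].
rewrite !nthE //; apply/implyP => nxy.
have nxy' : (inord x : 'I_4) != inord y.
  by apply: contra nxy => /eqP /(congr1 val); rewrite /= !inordK // => ->.
by rewrite key // EH !inordK.
Qed.

Lemma free : four_K1_C4_claw_free (@Gp_adj p).
Proof.
split; [|split].
- apply: (@nofree _ (fun _ _ => false)) => //; exact: c1.
- apply: (@nofree _ (fun i j => (j == (i + 1) %% 4) || (i == (j + 1) %% 4))) => //; exact: c2.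
- apply: (@nofree _ (fun i j => (i != j) && ((i == 0) || (j == 0)))) => //; exact: c3.
Qed.

Lemma col_lt (m : nat) (x : Gp_vert p) : 0 < m -> (x.1 %% m) * p + x.2 < m * p.
Proof.
move=> hm; have h1 := ltn_pmod x.1 hm; have h2 := ltn_ord x.2.
apply: (@leq_trans ((x.1 %% m).+1 * p)); first by rewrite mulSn [p + _]addnC ltn_add2l.
by rewrite leq_mul2r h1 orbT.
Qed.

Definition col (m : nat) (hm : 0 < m) (x : Gp_vert p) : 'I_(m * p) := Ordinal (@col_lt m x hm).

Lemma divK q a : a < p -> (q * p + a) %/ p = q.
Proof. by move=> ha; rewrite divnMDl // divn_small // addn0. Qed.
Lemma modK q a : a < p -> (q * p + a) %% p = a.
Proof. by move=> ha; rewrite modnMDl modn_small. Qed.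

Lemma col_proper (m : nat) (hm : 0 < m) :
  (forall i j : 'I_6, C6_adj i j -> i %% m != j %% m) -> proper_colouring (@Gp_adj p) (col m hm).
Proof.
move=> Hc x y; rewrite /Gp_adj => /orP[/andP[_ ne]|adj].
  apply: contra ne => /eqP /(congr1 val) /= E.
  apply/eqP/val_inj => /=.
  by rewrite -(@modK (x.1 %% m) _ (ltn_ord x.2)) E modK.
have := Hc _ _ adj; apply: contra => /eqP /(congr1 val) /= E.
by rewrite -(@divK (x.1 %% m) _ (ltn_ord x.2)) E divK.
Qed.

Lemma c5' (i j : 'I_6) : C6_adj i j -> (i %% 3 != j %% 3) && (i %% 2 != j %% 2).
Proof.
have := c5; move/allP/(_ i); rewrite mem_iota ltn_ord => /(_ isT).
by move/allP/(_ j); rewrite mem_iota ltn_ord => /(_ isT) /implyP; apply.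
Qed.

Lemma colourable2 : colourable (@Gp_adj p) (2 * p).
Proof.
exists (col 2 isT); apply: col_proper => i j /c5' /andP[].
by [].
Qed.

Lemma frozen3 : has_frozen_colouring (@Gp_adj p) (3 * p).
Proof.
exists (col 3 isT); split.
  by apply: col_proper => i j /c5' /andP[].
move=> [i a] k.
have hq : k %/ p < 3 by rewrite ltn_divLR // ltn_ord.
have := c4; move/allP/(_ i); rewrite mem_iota ltn_ord => /(_ isT).
move/allP/(_ (k %/ p)); rewrite mem_iota hq => /(_ isT) /hasP [j].
rewrite mem_iota add0n => /andP[_ hj] /andP[hn /eqP hjq].
exists (Ordinal hj, Ordinal (ltn_pmod k hp)).
apply/andP; split; last first.
  apply/eqP/val_inj => /=. by rewrite hjq -divn_eq.
case/orP: hn => [/eqP hji|adj].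
  have -> : Ordinal hj = i by apply: val_inj.
  rewrite /Gp_adj /= xpair_eqE eqxx /=.
  by case: (Ordinal (ltn_pmod k hp) =P a) => [->|/eqP ne]; rewrite ?eqxx // eq_sym ne.
by apply/orP; right; apply/orP; right; exact: adj.
Qed.
End S.

Theorem lemma1 (p : nat) (hp : 1 <= p) :
  four_K1_C4_claw_free (@Gp_adj p) /\
  colourable (@Gp_adj p) (2 * p) /\
  has_frozen_colouring (@Gp_adj p) (3 * p).
Proof.
split; first exact: free.
split; [exact: colourable2 | exact: frozen3].
Qed.
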